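(* In the model and protocol $\mathrm{OciorABA}^*$ described in the context, with $n\ge 3t+1$ and every honest node receiving an input message, if any honest node outputs a value $w$, then every honest node eventually outputs $w$.
   Context: Model: there are $n$ nodes $\mathrm{Node}_1,\dots,\mathrm{Node}_n$ in an asynchronous network (every message sent between honest nodes is eventually delivered, with arbitrary adversarial delay). An adaptive adversary may corrupt (make dishonest/Byzantine) at most $t$ nodes in total; $\mathcal F\subseteq[1:n]$ denotes the set of dishonest nodes; $n\ge 3t+1$. Primitives used as black boxes: (RBC) For each $j\in[1:n]$ there is a reliable broadcast instance $\mathrm{RBC}_j$ with leader $\mathrm{Node}_j$, satisfying: Consistency (if two honest nodes output $w',w''$ then $w'=w''$); Validity (if the leader is honest and inputs $w$, every honest node eventually outputs $w$); Totality (if one honest node outputs a value, every honest node eventually outputs a value). (ABBA) For each $j\in[1:n]$ there is a binary Byzantine agreement instance $\mathrm{ABBA}_j$ (inputs and outputs in $\{0,1\}$), satisfying: Termination (if all honest nodes provide inputs, every honest node eventually outputs a value and terminates); Consistency (if an honest node outputs $b$, every honest node eventually outputs $b$); Validity (if all honest nodes input the same $b$, every honest node eventually outputs $b$). (Erasure code) An $(n,t+1)$ erasure code over an alphabet $\Sigma$: an encoder $\mathrm{Enc}$ mapping a message $w$ to $(\mathrm{Enc}_1(w),\dots,\mathrm{Enc}_n(w))\in\Sigma^n$ and a decoder $\mathrm{Dec}$ such that for every set $K\subseteq[1:n]$ with $|K|=t+1$, $\mathrm{Dec}(\{\mathrm{Enc}_j(w)\}_{j\in K})=w$. Protocol $\mathrm{OciorABA}^*$,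 code for an honest $\mathrm{Node}_i$ with input message $w_i$: (1) Compute $(y^{(i)}_1,\dots,y^{(i)}_n)=\mathrm{Enc}(w_i)$ and input $y^{(i)}_i$ into $\mathrm{RBC}_i$ (as leader). (2) Upon delivery of a value $y^{(j)}_j$ from $\mathrm{RBC}_j$ (after step (1) has been executed), if $\mathrm{Node}_i$ has not yet given an input to $\mathrm{ABBA}_j$: set $a_i[j]=1$ if $y^{(j)}_j=y^{(i)}_j$ and $a_i[j]=0$ otherwise, and input $a_i[j]$ into $\mathrm{ABBA}_j$. (3) Upon obtaining outputs from $n-t$ of the instances $\mathrm{ABBA}_1,\dots,\mathrm{ABBA}_n$, input $0$ into every $\mathrm{ABBA}_j$ to which $\mathrm{Node}_i$ has not yet given an input. (4) Upon obtaining outputs from all $n$ ABBA instances: let $S=\{j:\mathrm{ABBA}_j\text{ output }1\}$. If $|S|<t+1$, output a default value $\bot$ and terminate. Otherwise let $K$ be the set of the $t+1$ smallest elements of $S$, wait for delivery of $y^{(j)}_j$ from $\mathrm{RBC}_j$ for all $j\in K$, output $\mathrm{Dec}(\{y^{(j)}_j\}_{j\in K})$ and terminate. *)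

(* Defs.v *)
(* An abstract, event-based model of executions of the
   asynchronous protocol OciorABA*.  Time is discrete (nat); "eventually"
   means "at some (finite) time".  For honest observer i and instance j:
     rbc_out  E i j = Some (d, y)  : Node_i obtains y from RBC_j at time d
     abba_in  E i j = Some (s, b)  : Node_i inputs b into ABBA_j at time s
     abba_out E i j = Some (s, b)  : Node_i obtains output b from ABBA_j at time s
     out      E i   = Some (s, v)  : Node_i outputs v (and terminates) at time s
   None means "never happens".  Byzantine nodes are unconstrained. *)
From mathcomp Require Import all_boot.
Set Implicit Arguments. Unset Strict Implicit. Unset Printing Implicit Defensive.

Record Execution (n : nat) (Sigma W : Type) := Exec {
  rbc_out  : 'I_n -> 'I_n -> option (nat * Sigma);
  abba_in  : 'I_n -> 'I_n -> option (nat * bool);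
  abba_out : 'I_n -> 'I_n -> option (nat * bool);
  out      : 'I_n -> option (nat * W)
}.

Definition happened_by {A : Type} (o : option (nat * A)) (T : nat) : bool :=
  if o is Some (s, _) then s <= T else false.

Section Model.
Variables (n t : nat) (Sigma : eqType) (W : Type).

Definition erasure_code (Enc : W -> 'I_n -> Sigma)
    (Dec : seq ('I_n * Sigma) -> W) : Prop :=
  forall (w : W) (K : {set 'I_n}), #|K| = t.+1 ->
    Dec [seq (j, Enc w j) | j <- enum K] = w.

Variable (honest : pred 'I_n) (E : Execution n Sigma W).

(* Reliable broadcast instances RBC_j (leader Node_j, honest leader input rbc_in j) *)
Definition RBC_properties (rbc_in : 'I_n -> Sigma) : Prop :=
  [/\
      (forall j i1 i2 d1 d2 y1 y2, honest i1 -> honest i2 ->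
         rbc_out E i1 j = Some (d1, y1) -> rbc_out E i2 j = Some (d2, y2) ->
         y1 = y2),
      (forall j, honest j -> forall i, honest i ->
         exists d, rbc_out E i j = Some (d, rbc_in j)) &
      (forall j i1, honest i1 -> rbc_out E i1 j <> None ->
         forall i2, honest i2 -> rbc_out E i2 j <> None)].

Definition ABBA_properties : Prop :=
  [/\
      (forall j, (forall i, honest i -> abba_in E i j <> None) ->
         forall i, honest i -> abba_out E i j <> None),
      (forall j i1 s b, honest i1 -> abba_out E i1 j = Some (s, b) ->
         forall i2, honest i2 -> exists s', abba_out E i2 j = Some (s', b)) &
      (forall j b, (forall i, honest i -> exists s, abba_in E i j = Some (s, b)) ->
         forall i, honest i -> exists s, abba_out E i j = Some (s, b))].

Definition n_abba_out (i : 'I_n) (T : nat) : nat :=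
  #|[set j : 'I_n | happened_by (abba_out E i j) T]|.

Definition S_set (i : 'I_n) : {set 'I_n} :=
  [set j : 'I_n | if abba_out E i j is Some (_, b) then b else false].

(* K = the t+1 smallest elements of S (enum of a set of ordinals is increasing) *)
Definition K_seq (S : {set 'I_n}) : seq 'I_n := take t.+1 (enum S).

Definition follows_OciorABA (Enc : W -> 'I_n -> Sigma)
    (Dec : seq ('I_n * Sigma) -> W) (bot : W)
    (rbc_in : 'I_n -> Sigma) (i : 'I_n) (wi : W) : Prop :=
  [/\
      rbc_in i = Enc wi i,
      (* steps (2)/(3), safety: every ABBA input is given by step 2 or step 3 *)
      (forall j s b, abba_in E i j = Some (s, b) ->
         (exists y, rbc_out E i j = Some (s, y) /\ b = (y == Enc wi j))
         \/ (b = false /\ n - t <= n_abba_out i s)),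
      (
      (forall j d y, rbc_out E i j = Some (d, y) ->
         exists s b, s <= d /\ abba_in E i j = Some (s, b)) /\
      (forall T, n - t <= n_abba_out i T ->
         forall j, exists s b, s <= T /\ abba_in E i j = Some (s, b))),
      (forall s v, out E i = Some (s, v) ->
         (forall j, happened_by (abba_out E i j) s) /\
         (if #|S_set i| < t.+1 then v = bot
          else exists ys : 'I_n -> Sigma,
            (forall j, j \in K_seq (S_set i) ->
               exists d, d <= s /\ rbc_out E i j = Some (d, ys j)) /\
            v = Dec [seq (j, ys j) | j <- K_seq (S_set i)])) &
      ((forall j, abba_out E i j <> None) ->
         (#|S_set i| < t.+1 \/
          forall j, j \in K_seq (S_set i) -> rbc_out E i j <> None) ->
         out E i <> None)].

End Model.

(* Main.v *)
Require Import Defs.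
From mathcomp Require Import all_boot.

Theorem theorem3 (n t : nat) (Sigma : eqType) (W : Type)
    (Enc : W -> 'I_n -> Sigma) (Dec : seq ('I_n * Sigma) -> W) (bot : W)
    (F : {set 'I_n}) (w : 'I_n -> W) (rbc_in : 'I_n -> Sigma)
    (E : Execution n Sigma W) :
  3 * t + 1 <= n ->
  #|F| <= t ->
  erasure_code t Enc Dec ->
  RBC_properties (fun i => i \notin F) E rbc_in ->
  ABBA_properties (fun i => i \notin F) E ->
  (forall i, i \notin F -> follows_OciorABA t E Enc Dec bot rbc_in i (w i)) ->
  forall (i : 'I_n) (s : nat) (v : W), i \notin F -> out E i = Some (s, v) ->
  forall i' : 'I_n, i' \notin F -> exists s', out E i' = Some (s', v).
Proof.
move=> _ _ _ [Rcons _ Rtot] [_ Acons _] Hf i s v Hi Hout i' Hi'.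
have [_ _ _ Hsafe _] := Hf i Hi.
have [_ _ _ Hsafe' Hlive'] := Hf i' Hi'.
have [Hall Hv] := Hsafe s v Hout.
have Hab : forall j, exists s0 b s1, abba_out E i j = Some (s0, b) /\
                                     abba_out E i' j = Some (s1, b).
  move=> j; move: (Hall j); rewrite /happened_by.
  case Ho: (abba_out E i j) => [[s0 b]|] // _.
  have [s1 Hs1] := Acons j i s0 b Hi Ho i' Hi'.
  by exists s0, b, s1.
have HS : S_set E i' = S_set E i.
  apply/setP => j; rewrite !inE.
  by have [s0 [b [s1 [-> ->]]]] := Hab j.
have Hrbc : t.+1 <= #|S_set E i| -> forall j, j \in K_seq t (S_set E i) -> rbc_out E i j <> None.
  move=> Hle j Hj; move: Hv; rewrite ltnNge Hle /= => -[ys [Hys _]].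
  by have [d [_ ->]] := Hys j Hj.
case Ho': (out E i') => [[s' v']|]; last first.
  exfalso; apply: (Hlive' _ _ Ho').
    move=> j; have [s0 [b [s1 [_ ->]]]] := Hab j; done.
  rewrite HS; case: (ltnP #|S_set E i| t.+1) => Hlt; [by left|right].
  move=> j Hj; exact: (Rtot j i Hi (Hrbc Hlt j Hj) i' Hi').
exists s'; have [_ Hv'] := Hsafe' s' v' Ho'.
move: Hv Hv'; rewrite HS; case: ifP => _; first by move=> -> ->.
move=> [ys [Hys ->]] [ys' [Hys' ->]].
congr (Some (_, Dec _)). apply/eq_in_map => j Hj.
have [d [_ H1]] := Hys j Hj; have [d' [_ H2]] := Hys' j Hj.
by rewrite (Rcons j i i' d d' (ys j) (ys' j) Hi Hi' H1 H2).
Qed.
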